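(* The class of context-free languages is not closed under ${\rm bdi}$; for instance, for $L=\{0^m1^m2^{2n}3^{4n}:m,n\ge1\}$ one has ${\rm bdi}(L)\cap(03)^+(13)^+(23)^+=\{(03)^n(13)^n(23)^{2n}:n\ge1\}$, so ${\rm bdi}(L)$ is not context-free.
   Context: For a word $w=a_1\cdots a_n$, ${\rm fh}(w)=a_1\cdots a_{\lfloor n/2\rfloor}$ and ${\rm lh}(w)=a_{\lfloor n/2\rfloor+1}\cdots a_n$. For words $x=a_1\cdots a_m$ and $y=b_1\cdots b_m$ the perfect shuffle is $x\,\text{sh}\,y=a_1b_1\cdots a_mb_m$, and if $y=b_1\cdots b_{m+1}$ has length $m+1$ then $x\,\text{sh}\,y=a_1b_1\cdots a_mb_mb_{m+1}$. ${\rm bdi}(w)={\rm fh}(w)\,\text{sh}\,{\rm lh}(w)$ and ${\rm bdi}(L)=\{{\rm bdi}(w):w\in L\}$. *)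

(* Defs.v *)
From Stdlib Require List.
From mathcomp Require Import all_boot.
Set Implicit Arguments. Unset Strict Implicit. Unset Printing Implicit Defensive.

Definition language (T : Type) := seq T -> Prop.

(* Nonterminals are natural numbers; a grammar has a start symbol and a
   finite list of productions A -> rhs, rhs a word over nonterminals
   (inl) and terminals (inr). *)
Record cfg (T : Type) := CFG {
  cfg_start : nat;
  cfg_rules : seq (nat * seq (nat + T))
}.

Inductive cfg_step (T : Type) (G : cfg T) : seq (nat + T) -> seq (nat + T) -> Prop :=
| CfgStep (u v : seq (nat + T)) (A : nat) (rhs : seq (nat + T)) :
    List.In (A, rhs) (cfg_rules G) ->
    cfg_step G (u ++ inl A :: v) (u ++ rhs ++ v).

Inductive cfg_derives (T : Type) (G : cfg T) : seq (nat + T) -> seq (nat + T) -> Prop :=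
| CfgRefl s : cfg_derives G s s
| CfgTrans s1 s2 s3 : cfg_step G s1 s2 -> cfg_derives G s2 s3 -> cfg_derives G s1 s3.

Definition cfg_lang (T : Type) (G : cfg T) : language T :=
  fun w => cfg_derives G [:: inl (cfg_start G)] (map inr w).

Definition context_free (T : Type) (L : language T) : Prop :=
  exists G : cfg T, forall w, L w <-> cfg_lang G w.

Definition fh (T : Type) (w : seq T) : seq T := take (size w)./2 w.
Definition lh (T : Type) (w : seq T) : seq T := drop (size w)./2 w.

Fixpoint sh (T : Type) (x y : seq T) : seq T :=
  match x, y with
  | a :: x', b :: y' => a :: b :: sh x' y'
  | [::], _ => y
  | _, [::] => x
  end.

Definition bdi (T : Type) (w : seq T) : seq T := sh (fh w) (lh w).

Definition bdi_lang (T : Type) (L : language T) : language T :=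
  fun w => exists v, L v /\ w = bdi v.

Definition L14 : language nat :=
  fun w => exists m n, 1 <= m /\ 1 <= n /\
    w = nseq m 0 ++ nseq m 1 ++ nseq (2 * n) 2 ++ nseq (4 * n) 3.

Definition wpow (T : Type) (x : seq T) (k : nat) : seq T := flatten (nseq k x).

Definition R14 : language nat :=
  fun w => exists a b c, 1 <= a /\ 1 <= b /\ 1 <= c /\
    w = wpow [:: 0; 3] a ++ wpow [:: 1; 3] b ++ wpow [:: 2; 3] c.

Definition K14 : language nat :=
  fun w => exists n, 1 <= n /\
    w = wpow [:: 0; 3] n ++ wpow [:: 1; 3] n ++ wpow [:: 2; 3] (2 * n).

(* Main.v *)
Require Import Defs.
From mathcomp Require Import all_boot.
From mathcomp Require Import zify.
Set Implicit Arguments. Unset Strict Implicit. Unset Printing Implicit Defensive.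


Section CFG.
Variable T : Type.
Variable G : cfg T.
Local Notation rules := (cfg_rules G).

Inductive DS : seq (nat + T) -> seq T -> nat -> Prop :=
| DSnil : DS [::] [::] 0
| DSterm a ss w k : DS ss w k -> DS (inr a :: ss) (a :: w) k
| DSnt A rhs ss w1 w2 k1 k2 : List.In (A, rhs) rules -> DS rhs w1 k1 -> DS ss w2 k2 ->
    DS (inl A :: ss) (w1 ++ w2) (k1 + k2).+1.

Lemma DS_eq ss w k w' k' : DS ss w k -> w = w' -> k = k' -> DS ss w' k'.
Proof. by move=> H <- <-. Qed.

Lemma derives_trans s1 s2 s3 : cfg_derives G s1 s2 -> cfg_derives G s2 s3 -> cfg_derives G s1 s3.
Proof. elim=> [//|a b c Hab _ IH] H; apply: CfgTrans Hab (IH H). Qed.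

Lemma derives_ctx u v s1 s2 : cfg_derives G s1 s2 -> cfg_derives G (u ++ s1 ++ v) (u ++ s2 ++ v).
Proof.
elim=> [s|a b c Hab _ IH]; first exact: CfgRefl.
apply: CfgTrans IH; case: Hab => u0 v0 A rhs Hin.
have E1 : u ++ (u0 ++ inl A :: v0) ++ v = (u ++ u0) ++ inl A :: (v0 ++ v) by rewrite -!catA.
have E2 : u ++ (u0 ++ rhs ++ v0) ++ v = (u ++ u0) ++ rhs ++ (v0 ++ v) by rewrite -!catA.
rewrite E1 E2; exact: CfgStep.
Qed.

Lemma sound ss w k : DS ss w k -> cfg_derives G ss (map inr w).
Proof.
elim=> [|a ss0 w0 k0 _ IH|A rhs ss0 w1 w2 k1 k2 Hin _ IH1 _ IH2].
- exact: CfgRefl.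
- have := derives_ctx [:: inr a] [::] IH; by rewrite !cats0.
- apply: (@CfgTrans _ _ _ (rhs ++ ss0)).
    by have := @CfgStep _ G [::] ss0 A rhs Hin.
  apply: (@derives_trans _ (map inr w1 ++ ss0)).
    by have := derives_ctx [::] ss0 IH1.
  have := derives_ctx (map inr w1) [::] IH2; by rewrite !cats0 map_cat.
Qed.

Lemma DS_cons_inv s ss w k : DS (s :: ss) w k ->
  (exists a w', s = inr a /\ w = a :: w' /\ DS ss w' k) \/
  (exists A rhs w1 w2 k1 k2, s = inl A /\ List.In (A,rhs) rules /\ DS rhs w1 k1 /\
      DS ss w2 k2 /\ w = w1 ++ w2 /\ k = (k1+k2).+1).
Proof. move=> H; inversion H; subst; [left; by exists a, w0 | right; by exists A, rhs, w1, w2, k1, k2]. Qed.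

Lemma DS_nil_inv w k : DS [::] w k -> w = [::] /\ k = 0.
Proof. by move=> H; inversion H. Qed.

Lemma DS_cat a b w k : DS (a ++ b) w k <->
  exists w1 w2 k1 k2, w = w1 ++ w2 /\ k = k1 + k2 /\ DS a w1 k1 /\ DS b w2 k2.
Proof.
split.
- elim: a w k => [|s a IH] w k /= H.
    by exists [::], w, 0, k; split=> //; split=> //; split=> //; exact: DSnil.
  case: (DS_cons_inv H) => [[x [w' [-> [-> H']]]]|[A [rhs [w1 [w2 [k1 [k2 [-> [Hin [H1 [H2 [-> ->]]]]]]]]]]]].
    have [u1 [u2 [l1 [l2 [-> [-> [Ha Hb]]]]]]] := IH _ _ H'.
    exists (x :: u1), u2, l1, l2; split=> //; split=> //; split=> //; exact: DSterm.
  have [u1 [u2 [l1 [l2 [-> [-> [Ha Hb]]]]]]] := IH _ _ H2.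
  exists (w1 ++ u1), u2, (k1 + l1).+1, l2; split; first by rewrite catA.
  split; first lia. split; [exact: DSnt Hin H1 Ha | exact: Hb].
- move=> [w1 [w2 [k1 [k2 [-> [-> [Ha Hb]]]]]]].
  elim: Ha => [|x ss0 w0 k0 _ IH|A rhs ss0 u1 u2 l1 l2 Hin H1 _ _ IH] /=.
  + by rewrite add0n.
  + exact: DSterm.
  + apply: DS_eq (DSnt Hin H1 IH) _ _; [by rewrite catA| lia].
Qed.

Lemma DS_maps w : DS (map inr w) w 0.
Proof. elim: w => [|a w IH] /=; [exact: DSnil| exact: DSterm]. Qed.

Lemma complete ss s' : cfg_derives G ss s' -> forall w, s' = map inr w -> exists k, DS ss w k.
Proof.
elim=> [s|s1 s2 s3 Hst _ IH] w E.
  by subst; exists 0; exact: DS_maps.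
have [k Hk] := IH w E.
case: Hst Hk => u v A rhs Hin Hk.
have [w1 [w23 [k1 [k23 [-> [_ [Hu H23]]]]]]] := proj1 (DS_cat _ _ _ _) Hk.
have [w2 [w3 [k2 [k3 [-> [_ [Hr Hv]]]]]]] := proj1 (DS_cat _ _ _ _) H23.
exists (k1 + (k2 + k3).+1); apply/DS_cat.
exists w1, (w2 ++ w3), k1, (k2 + k3).+1; split=> //; split=> //; split=> //; exact: DSnt Hin Hr Hv.
Qed.

Lemma DS_single A rhs w k : List.In (A, rhs) rules -> DS rhs w k -> DS [:: inl A] w k.+1.
Proof. move=> Hin H; apply: DS_eq (DSnt Hin H DSnil) _ _; [exact: cats0 | lia]. Qed.

Lemma DS_single_inv A w k : DS [:: inl A] w k ->
  exists rhs k', k = k'.+1 /\ List.In (A, rhs) rules /\ DS rhs w k'.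
Proof.
move=> H; case: (DS_cons_inv H) => [[a [w' [//]]]|[A' [rhs [w1 [w2 [k1 [k2 [[<-] [Hin [H1 [H2 [-> ->]]]]]]]]]]]].
have [-> ->] := DS_nil_inv H2.
by exists rhs, k1; rewrite cats0 addn0.
Qed.

Definition Sub ss w k A x kx := DS [:: inl A] x kx /\ exists u z c, w = u ++ x ++ z /\ k = c + kx /\
  forall x' kx', DS [:: inl A] x' kx' -> DS ss (u ++ x' ++ z) (c + kx').

Lemma Sub_node A rhs ss w1 w2 k1 k2 : List.In (A, rhs) rules -> DS rhs w1 k1 -> DS ss w2 k2 ->
  Sub (inl A :: ss) (w1 ++ w2) (k1 + k2).+1 A w1 k1.+1.
Proof.
move=> Hin H1 H2; split; first exact: DS_single H1.
exists [::], w2, k2; split=> //; split; first lia.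
move=> x' kx' /DS_single_inv [rhs' [k' [-> [Hin' H']]]].
apply: DS_eq (DSnt Hin' H' H2) _ _ => //; lia.
Qed.

Lemma Sub_term a ss w k B x kx : Sub ss w k B x kx -> Sub (inr a :: ss) (a :: w) k B x kx.
Proof.
move=> [HB [u [z [c [-> [-> R]]]]]]; split=> //.
exists (a :: u), z, c; split=> //; split=> // x' kx' H; exact: DSterm (R _ _ H).
Qed.

Lemma Sub_left A rhs ss w1 w2 k1 k2 B x kx : List.In (A, rhs) rules -> Sub rhs w1 k1 B x kx ->
  DS ss w2 k2 -> Sub (inl A :: ss) (w1 ++ w2) (k1 + k2).+1 B x kx.
Proof.
move=> Hin [HB [u [z [c [-> [-> R]]]]]] H2; split=> //.
exists u, (z ++ w2), (c + k2).+1; split; first by rewrite -!catA.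
split; first lia.
move=> x' kx' H; apply: DS_eq (DSnt Hin (R _ _ H) H2) _ _; [by rewrite -!catA| lia].
Qed.

Lemma Sub_right A rhs ss w1 w2 k1 k2 B x kx : List.In (A, rhs) rules -> DS rhs w1 k1 ->
  Sub ss w2 k2 B x kx -> Sub (inl A :: ss) (w1 ++ w2) (k1 + k2).+1 B x kx.
Proof.
move=> Hin H1 [HB [u [z [c [-> [-> R]]]]]]; split=> //.
exists (w1 ++ u), z, (k1 + c).+1; split; first by rewrite -!catA.
split; first lia.
move=> x' kx' H; apply: DS_eq (DSnt Hin H1 (R _ _ H)) _ _; [by rewrite -!catA| lia].
Qed.

Lemma Sub_top A rhs w1 k1 B x kx : List.In (A, rhs) rules -> Sub rhs w1 k1 B x kx ->
  Sub [:: inl A] w1 k1.+1 B x kx.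
Proof.
move=> Hin HS; have := Sub_left Hin HS DSnil.
by rewrite cats0 addn0.
Qed.

Lemma Sub_trans ss w k A x kx B y ky : Sub ss w k A x kx -> Sub [:: inl A] x kx B y ky ->
  Sub ss w k B y ky.
Proof.
move=> [HA [u1 [z1 [c1 [-> [-> R1]]]]]] [HB [u2 [z2 [c2 [-> [-> R2]]]]]]; split=> //.
exists (u1 ++ u2), (z2 ++ z1), (c1 + c2); split; first by rewrite -!catA.
split; first lia.
move=> y' ky' H; apply: DS_eq (R1 _ _ (R2 _ _ H)) _ _; [by rewrite -!catA| lia].
Qed.

Lemma Sub_size ss w k A x kx : Sub ss w k A x kx -> size x <= size w.
Proof. move=> [_ [u [z [c [-> _]]]]]; rewrite !size_cat; lia. Qed.

Lemma Sub_le ss w k A x kx : Sub ss w k A x kx -> kx <= k.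
Proof. move=> [_ [u [z [c [_ [-> _]]]]]]; lia. Qed.

Definition Rep ss w k := exists A x kx y ky, Sub ss w k A x kx /\ Sub [:: inl A] x kx A y ky /\ ky < kx.

Variable b : nat.
Hypothesis Hb : forall A rhs, List.In (A, rhs) rules -> size rhs <= b.
Hypothesis b_gt0 : 0 < b.

Lemma L1 (B : nat) : 0 < B -> forall ss w k, DS ss w k ->
  size w <= size ss * B \/ exists A x kx, Sub ss w k A x kx /\ B < size x <= b * B.
Proof.
move=> B0 ss w k; elim=> [|a ss0 w0 k0 _ IH|A rhs ss0 w1 w2 k1 k2 Hin H1 IH1 H2 IH2].
- by left.
- case: IH => [H|[A [x [kx [HS Hs]]]]].
    by left => /=; rewrite mulSn; lia.
  by right; exists A, x, kx; split=> //; exact: Sub_term.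
- case: IH1 => [HL1|[C [x [kx [HS Hs]]]]]; last first.
    by right; exists C, x, kx; split=> //; exact: Sub_left Hin HS H2.
  case: IH2 => [HL2|[C [x [kx [HS Hs]]]]]; last first.
    by right; exists C, x, kx; split=> //; exact: Sub_right Hin H1 HS.
  case: (ltnP B (size w1)) => HB.
    right; exists A, w1, k1.+1; split; first exact: Sub_node Hin H1 H2.
    rewrite HB /=; apply: leq_trans HL1 _; rewrite leq_mul2r (Hb Hin); lia.
  by left; rewrite size_cat /= mulSn; lia.
Qed.

Definition nts := undup (map fst rules).
Definition rS (S : seq nat) := size [seq n <- nts | n \notin S].

Lemma In_nts A rhs : List.In (A, rhs) rules -> A \in nts.
Proof.
rewrite /nts mem_undup; elim: rules => [//|[A' r'] l IH] /= [[-> _]|H].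
  by rewrite inE eqxx.
by rewrite inE IH ?orbT.
Qed.

Lemma rS_cons A S : A \in nts -> A \notin S -> rS S = (rS (A :: S)).+1.
Proof.
move=> HA HS; rewrite /rS.
have U : uniq [seq n <- nts | n \notin S] by rewrite filter_uniq // undup_uniq.
have M : A \in [seq n <- nts | n \notin S] by rewrite mem_filter HS.
have := size_rem M; rewrite rem_filter // -filter_predI.
rewrite (@eq_filter _ _ (fun n => n \notin A :: S)); last by move=> n /=; rewrite inE negb_or.
move=> ->; have : 0 < size [seq n <- nts | n \notin S] by case: [seq n <- nts | n \notin S] M.
lia.
Qed.

Lemma Pl ss w k : DS ss w k -> forall S, size ss * b ^ (rS S) < size w ->
  Rep ss w k \/ exists B x kx, B \in S /\ Sub ss w k B x kx.
Proof.
elim=> [|a ss0 w0 k0 _ IH|A rhs ss0 w1 w2 k1 k2 Hin H1 IH1 H2 IH2] S /=.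
- by [].
- rewrite mulSn => Hs; have Hp : 0 < b ^ rS S by rewrite expn_gt0 b_gt0.
  case: (IH S ltac:(lia)) => [[C [x [kx [y [ky [HS [HS2 Hl]]]]]]]|[B [x [kx [HBS HS]]]]].
    by left; exists C, x, kx, y, ky; split=> //; exact: Sub_term.
  by right; exists B, x, kx; split=> //; exact: Sub_term.
- rewrite mulSn size_cat => Hs.
  case: (ltnP (size ss0 * b ^ rS S) (size w2)) => Hw2.
    case: (IH2 S Hw2) => [[C [x [kx [y [ky [HS [HS2 Hl]]]]]]]|[B [x [kx [HBS HS]]]]].
      by left; exists C, x, kx, y, ky; split=> //; exact: Sub_right Hin H1 HS.
    by right; exists B, x, kx; split=> //; exact: Sub_right Hin H1 HS.
  have Hw1 : b ^ rS S < size w1 by lia.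
  case: (boolP (A \in S)) => HAS.
    by right; exists A, w1, k1.+1; split=> //; exact: Sub_node Hin H1 H2.
  have E := rS_cons (In_nts Hin) HAS.
  have Hw1' : size rhs * b ^ rS (A :: S) < size w1.
    apply: leq_ltn_trans Hw1; rewrite E expnS leq_mul2r (Hb Hin) orbT //.
  case: (IH1 _ Hw1') => [[C [x [kx [y [ky [HS [HS2 Hl]]]]]]]|[B [x [kx [HBS HS]]]]].
    by left; exists C, x, kx, y, ky; split=> //; exact: Sub_left Hin HS H2.
  move: HBS; rewrite inE => /orP [/eqP EB|HBS].
    subst B; left; exists A, w1, k1.+1, x, kx; split; first exact: Sub_node Hin H1 H2.
    split; first exact: Sub_top Hin HS.
    by have := Sub_le HS; lia.
  by right; exists B, x, kx; split=> //; exact: Sub_left Hin HS H2.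
Qed.

End CFG.


Section Pump.
Variable T : Type.

Definition bnd (l : seq (nat * seq (nat + T))) := (foldr maxn 0 [seq size r.2 | r <- l]).+1.

Lemma bnd_ok l A rhs : List.In (A, rhs) l -> size rhs <= bnd l.
Proof.
rewrite /bnd; elim: l => [//|[A' r'] l IH] /= [[_ ->]|H].
  by apply: leqW; rewrite leq_maxl.
by apply: leq_trans (IH H) _; rewrite ltnS leq_maxr.
Qed.

Lemma flat_nseqS (v : seq T) i : flatten (nseq i.+1 v) = flatten (nseq i v) ++ v.
Proof.
have E : forall j, nseq j.+1 v = rcons (nseq j v) v.
  by elim=> [//|j IH]; rewrite /= -IH.
by rewrite E flatten_rcons.
Qed.

Theorem pumping (G : cfg T) : exists p, forall w, cfg_lang G w -> p < size w ->
  exists u v x y z, w = u ++ v ++ x ++ y ++ z /\ 0 < size (v ++ y) /\ size (v ++ x ++ y) <= p /\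
  forall i, cfg_lang G (u ++ flatten (nseq i v) ++ x ++ flatten (nseq i y) ++ z).
Proof.
set b := bnd (cfg_rules G).
have Hb : forall A rhs, List.In (A, rhs) (cfg_rules G) -> size rhs <= b by move=> A rhs; exact: bnd_ok.
have b0 : 0 < b by [].
set N := size (nts G).
exists (b ^ N.+1) => w Hw Hp.
have [k Hk] := complete Hw (erefl _).
elim/ltn_ind: k Hk => k IH Hk.
have B0 : 0 < b ^ N by rewrite expn_gt0 b0.
case: (L1 Hb b0 B0 Hk) => [Hs|[A0 [w0 [k0 [HS0 Hs0]]]]].
  by move: Hs Hp; rewrite expnS mul1n => Hs Hp; exfalso; move: Hs; rewrite leqNgt; apply/negP/negPn; apply: leq_ltn_trans Hp; rewrite leq_pmull.
have Hr0 : rS G [::] = N.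
  by rewrite /rS (@eq_filter _ _ predT) ?filter_predT // => n; rewrite in_nil.
have D0 := HS0.1.
case: (Pl Hb b0 D0 (S := [::])) => [|HR|[B [x [kx [//]]]]].
  by rewrite Hr0 /= mul1n; case/andP: Hs0.
have [A [X [kX [y [ky [HSa [HSb Hl]]]]]]] := HR.
have HS := Sub_trans HS0 HSa.
have HsX : size X <= b ^ N.+1.
  by rewrite expnS; apply: leq_trans (Sub_size HSa) _; case/andP: Hs0.
case: HS => DX [u [z [c0 [Ew [Ek R0]]]]].
case: HSb => Dy [v [y' [c1 [EX [EkX R1]]]]].
have pumpA : forall i, DS G [:: inl A] (flatten (nseq i v) ++ y ++ flatten (nseq i y')) (c1 * i + ky).
  elim=> [|i IHi]; first by rewrite /= muln0 add0n cats0.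
  apply: DS_eq (R1 _ _ IHi) _ _; last by lia.
  by rewrite (flat_nseqS y') /= -!catA.
case: (posnP (size (v ++ y'))) => Hvy; last first.
  exists u, v, y, y', z; split; first by rewrite Ew EX -!catA.
  split=> //; split; first by rewrite -EX.
  move=> i; rewrite /cfg_lang; have := R0 _ _ (pumpA i); rewrite -!catA; exact: sound.
move: Hvy; rewrite size_cat => /eqP; rewrite addn_eq0 => /andP [/eqP/size0nil Ev /eqP/size0nil Ey].
subst v y'; rewrite /= cats0 in EX; subst X.
apply: (IH (c0 + ky)); first lia.
by rewrite Ew; apply: R0.
Qed.
End Pump.


Lemma nseqSr (T : Type) (x : T) n : nseq n.+1 x = nseq n x ++ [:: x].
Proof. by elim: n => [//|n IH]; rewrite /= -IH. Qed.

Lemma perm_sh (T : eqType) (x y : seq T) : perm_eq (sh x y) (x ++ y).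
Proof.
elim: x y => [|a x IH] [|b y] //=; first by rewrite cats0.
rewrite perm_cons; apply: (@perm_trans _ (b :: x ++ y)); first by rewrite perm_cons.
by rewrite perm_sym -(cat1s b y) perm_catCA.
Qed.

Lemma count_bdi (T : eqType) (a : pred T) v : count a (bdi v) = count a v.
Proof. by rewrite /bdi (permP (perm_sh _ _)) /fh /lh cat_take_drop. Qed.

Lemma count_wpow (T : Type) (a : pred T) s k : count a (wpow s k) = k * count a s.
Proof. by elim: k => [//|k IH]; rewrite /wpow /= count_cat -/(wpow s k) IH mulSn. Qed.

Lemma size_wpow (T : Type) (s : seq T) k : size (wpow s k) = k * size s.
Proof. by elim: k => [//|k IH]; rewrite /wpow /= size_cat -/(wpow s k) IH mulSn. Qed.

Lemma nth_wpow (a b : nat) n i : nth 0 (wpow [:: a; b] n) i =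
  if i < 2 * n then (if odd i then b else a) else 0.
Proof.
elim: n i => [|n IH] i; first by rewrite nth_nil.
rewrite /wpow /= -/(wpow _ n); case: i => [|[|i]] //=.
  by have -> : 1 < 2 * n.+1 by lia.
rewrite IH negbK; have -> : (i.+2 < 2 * n.+1) = (i < 2 * n) by lia.
by [].
Qed.

Lemma count_flat (T : Type) (a : pred T) i v : count a (flatten (nseq i v)) = i * count a v.
Proof. exact: count_wpow. Qed.

Lemma sh_block (c : nat) a x y : sh (nseq a c ++ x) (nseq a 3 ++ y) = wpow [:: c; 3] a ++ sh x y.
Proof. by elim: a => [//|a IH] /=; rewrite IH. Qed.

Lemma bdi_K n : bdi (nseq n 0 ++ nseq n 1 ++ nseq (2 * n) 2 ++ nseq (4 * n) 3) =
  wpow [:: 0; 3] n ++ wpow [:: 1; 3] n ++ wpow [:: 2; 3] (2 * n).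
Proof.
set v := _ ++ _.
have Hs : size v = (4 * n).*2 by rewrite /v !size_cat !size_nseq -addnn; lia.
have Ev : v = (nseq n 0 ++ nseq n 1 ++ nseq (2 * n) 2) ++ nseq (4 * n) 3 by rewrite /v !catA.
have Hs1 : size (nseq n 0 ++ nseq n 1 ++ nseq (2 * n) 2) = 4 * n by rewrite !size_cat !size_nseq; lia.
rewrite /bdi /fh /lh Hs doubleK Ev -{1}Hs1 take_size_cat // -{2}Hs1 drop_size_cat //.
have E4 : 4 * n = n + (n + 2 * n) by lia.
rewrite Hs1 E4 nseqD nseqD sh_block sh_block.
rewrite -[nseq (2 * n) 2]cats0 -[nseq (2 * n) 3]cats0 sh_block /= cats0.
by [].
Qed.

Lemma count_L14 j m n : count (pred1 j) (nseq m 0 ++ nseq m 1 ++ nseq (2 * n) 2 ++ nseq (4 * n) 3) =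
  (j == 0) * m + (j == 1) * m + (j == 2) * (2 * n) + (j == 3) * (4 * n).
Proof. rewrite !count_cat !count_nseq /= !(eq_sym j); lia. Qed.

Lemma memb w : bdi_lang L14 w -> exists m n,
  count (pred1 0) w = m /\ count (pred1 1) w = m /\ count (pred1 2) w = 2 * n /\
  count (pred1 3) w = 4 * n /\ (n < m -> nth 0 w 1 != 3).
Proof.
move=> [v [[m [n [Hm [Hn Ev]]]] ->]].
exists m, n; rewrite !count_bdi Ev !count_L14 /=; do 4 (split; first lia).
move=> Hnm; set s := _ ++ _.
have Hs : size s = (m + 3 * n).*2 by rewrite /s !size_cat !size_nseq -addnn; lia.
rewrite /bdi /fh /lh Hs doubleK.
have Ht : 0 < size (take (m + 3 * n) s) by rewrite size_take Hs; case: ifP; lia.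
have Hd : 0 < size (drop (m + 3 * n) s) by rewrite size_drop Hs; lia.
have Hb : nth 0 (drop (m + 3 * n) s) 0 != 3.
  rewrite nth_drop addn0 /s nth_cat size_nseq.
  have -> : (m + 3 * n < m) = false by lia.
  rewrite nth_cat size_nseq.
  case: ifP => H1; first by rewrite nth_nseq; case: ifP.
  rewrite nth_cat size_nseq.
  have -> : (m + 3 * n - m - m < 2 * n) = true by lia.
  by rewrite nth_nseq; case: ifP.
move: Ht Hd Hb.
case: (take (m + 3 * n) s) => [//|a x] _; case: (drop (m + 3 * n) s) => [//|b y] _ /=.
by [].
Qed.

Lemma K_in_bdi n : 1 <= n -> bdi_lang L14 (wpow [:: 0; 3] n ++ wpow [:: 1; 3] n ++ wpow [:: 2; 3] (2 * n)).
Proof. move=> Hn; exists (nseq n 0 ++ nseq n 1 ++ nseq (2 * n) 2 ++ nseq (4 * n) 3); split; last by rewrite bdi_K.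
by exists n, n.
Qed.

Lemma part2 w : (bdi_lang L14 w /\ R14 w) <-> K14 w.
Proof.
split.
- move=> [[v [[m [n [Hm [Hn Ev]]]] Ew]] [a [b [c [Ha [Hb [Hc Er]]]]]]].
  have C j := congr1 (count (pred1 j)) (etrans (esym Ew) Er).
  have C0 := C 0; have C1 := C 1; have C2 := C 2; have C3 := C 3.
  rewrite count_bdi Ev count_L14 !count_cat !count_wpow /= in C0.
  rewrite count_bdi Ev count_L14 !count_cat !count_wpow /= in C1.
  rewrite count_bdi Ev count_L14 !count_cat !count_wpow /= in C2.
  rewrite count_bdi Ev count_L14 !count_cat !count_wpow /= in C3.
  exists n; split => //; rewrite Er.
  have -> : a = n by lia. have -> : b = n by lia. have -> : c = 2 * n by lia. by [].
- move=> [n [Hn ->]]; split; first exact: K_in_bdi.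
  by exists n, n, (2 * n); do 3 (split; first lia).
Qed.

Definition G14 : cfg nat := CFG 0
  [:: (0, [:: inl 1; inl 2]);
      (1, [:: inr 0; inl 1; inr 1]);
      (1, [:: inr 0; inr 1]);
      (2, [:: inr 2; inr 2; inl 2; inr 3; inr 3; inr 3; inr 3]);
      (2, [:: inr 2; inr 2; inr 3; inr 3; inr 3; inr 3])].

Lemma inv_t (T : Type) (G : cfg T) a ss w k : DS G (inr a :: ss) w k -> exists w', w = a :: w' /\ DS G ss w' k.
Proof.
case/DS_cons_inv => [[a' [w' [[<-] [-> H]]]]|[A [_ [_ [_ [_ [_ [//]]]]]]]].
by exists w'.
Qed.

Lemma inv_n (T : Type) (G : cfg T) A ss w k : DS G (inl A :: ss) w k ->
  exists w1 w2 k1 k2, w = w1 ++ w2 /\ k = k1 + k2 /\ DS G [:: inl A] w1 k1 /\ DS G ss w2 k2.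
Proof. move=> H; exact: (proj1 (DS_cat G [:: inl A] ss w k) H). Qed.

Lemma A_lang k w : DS G14 [:: inl 1] w k -> exists m, 1 <= m /\ w = nseq m 0 ++ nseq m 1.
Proof.
elim/ltn_ind: k w => k IH w /DS_single_inv [rhs [k' [Ekk [Hin H]]]].
move: Hin => /= [E|[E|[E|[E|[E|//]]]]]; case: E => // E; subst rhs.
- have [w1 [-> H1]] := inv_t H.
  have [w2 [w3 [k2 [k3 [-> [Ek [H2 H3]]]]]]] := inv_n H1.
  have [w4 [-> H4]] := inv_t H3.
  have [-> _] := DS_nil_inv H4.
  have [m [Hm ->]] := IH k2 ltac:(lia) _ H2.
  by exists m.+1; split=> //; rewrite [nseq m.+1 1]nseqSr -!catA.
- have [w1 [-> H1]] := inv_t H.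
  have [w2 [-> H2]] := inv_t H1.
  have [-> _] := DS_nil_inv H2.
  by exists 1.
Qed.

Lemma B_lang k w : DS G14 [:: inl 2] w k -> exists n, 1 <= n /\ w = nseq (2 * n) 2 ++ nseq (4 * n) 3.
Proof.
elim/ltn_ind: k w => k IH w /DS_single_inv [rhs [k' [Ekk [Hin H]]]].
move: Hin => /= [E|[E|[E|[E|[E|//]]]]]; case: E => // E; subst rhs.
- have [w1 [-> H1]] := inv_t H.
  have [w1' [-> H1']] := inv_t H1.
  have [w2 [w3 [k2 [k3 [-> [Ek [H2 H3]]]]]]] := inv_n H1'.
  have [x1 [-> X1]] := inv_t H3.
  have [x2 [-> X2]] := inv_t X1.
  have [x3 [-> X3]] := inv_t X2.
  have [x4 [-> X4]] := inv_t X3.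
  have [-> _] := DS_nil_inv X4.
  have [n [Hn ->]] := IH k2 ltac:(lia) _ H2.
  exists n.+1; split=> //.
  have -> : 2 * n.+1 = (2 * n).+2 by lia.
  have -> : 4 * n.+1 = 4 * n + 4 by lia.
  by rewrite nseqD -!catA.
- have [x1 [-> X1]] := inv_t H.
  do 5 (have [? [-> X1']] := inv_t X1; clear X1; rename X1' into X1).
  have [-> _] := DS_nil_inv X1.
  by exists 1.
Qed.

Lemma In2 : List.In (1, [:: inr 0; inl 1; inr 1]) (cfg_rules G14). Proof. by right; left. Qed.
Lemma In3 : List.In (1, [:: inr 0; inr 1]) (cfg_rules G14). Proof. by do 2 right; left. Qed.
Lemma In4 : List.In (2, [:: inr 2; inr 2; inl 2; inr 3; inr 3; inr 3; inr 3]) (cfg_rules G14).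
Proof. by do 3 right; left. Qed.
Lemma In5 : List.In (2, [:: inr 2; inr 2; inr 3; inr 3; inr 3; inr 3]) (cfg_rules G14).
Proof. by do 4 right; left. Qed.
Lemma In1 : List.In (0, [:: inl 1; inl 2]) (cfg_rules G14). Proof. by left. Qed.

Lemma DS_app (T : Type) (G : cfg T) a b w1 w2 k1 k2 : DS G a w1 k1 -> DS G b w2 k2 -> DS G (a ++ b) (w1 ++ w2) (k1 + k2).
Proof. move=> H1 H2; apply/DS_cat; exists w1, w2, k1, k2; do 3 (split=> //). Qed.

Lemma DA m : exists k, DS G14 [:: inl 1] (nseq m.+1 0 ++ nseq m.+1 1) k.
Proof.
elim: m => [|m [k Hk]].
  exists 1; apply: (DS_single In3).
  by do 2 apply: DSterm; exact: DSnil.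
exists (k + 0).+1; apply: (DS_single In2); apply: DSterm.
have := DS_app Hk (DSterm 1 (DSnil G14)).
by rewrite [nseq m.+2 1]nseqSr -!catA.
Qed.

Lemma DB n : exists k, DS G14 [:: inl 2] (nseq (2 * n.+1) 2 ++ nseq (4 * n.+1) 3) k.
Proof.
elim: n => [|n [k Hk]].
  exists 1; apply: (DS_single In5).
  by do 6 apply: DSterm; exact: DSnil.
exists (k + 0).+1.
have -> : 2 * n.+2 = (2 * n.+1).+2 by lia.
have -> : 4 * n.+2 = 4 * n.+1 + 4 by lia.
rewrite nseqD; apply: (DS_single In4); apply: (DSterm 2); apply: (DSterm 2).
have := DS_app Hk (DSterm 3 (DSterm 3 (DSterm 3 (DSterm 3 (DSnil G14))))).
by rewrite -!catA.
Qed.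

Lemma part1 : context_free L14.
Proof.
exists G14 => w; split.
- move=> [m [n [Hm [Hn ->]]]].
  case: m Hm => [//|m] _; case: n Hn => [//|n] _.
  have [k1 H1] := DA m; have [k2 H2] := DB n.
  rewrite /cfg_lang catA; apply: (sound (k := (k1 + (k2 + 0)).+1)).
  apply: (DS_single In1); have H3 := DS_app H1 (DS_app H2 (DSnil G14)).
  by apply: DS_eq H3 _ _; rewrite ?cats0.
- move=> Hw; have [k Hk] := complete Hw (erefl _).
  have [rhs [k' [_ [Hin H]]]] := DS_single_inv Hk.
  move: Hin => /= [E|[E|[E|[E|[E|//]]]]]; case: E => // E; subst rhs.
  have [w1 [w2 [k1 [k2 [-> [_ [H1 H2]]]]]]] := inv_n H.
  have [w3 [w4 [k3 [k4 [-> [_ [H3 H4]]]]]]] := inv_n H2.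
  have [-> _] := DS_nil_inv H4.
  have [m [Hm ->]] := A_lang H1.
  have [n [Hn ->]] := B_lang H3.
  by exists m, n; rewrite cats0 -!catA.
Qed.

Definition zq q := wpow [:: 0; 3] q ++ wpow [:: 1; 3] q ++ wpow [:: 2; 3] (2 * q).

Lemma odd_sub2 i k : 2 * k <= i -> odd (i - 2 * k) = odd i.
Proof. move=> H'; by rewrite oddB // oddM /= addbF. Qed.

Lemma nth_z q i : nth 0 (zq q) i =
  if i < 2 * q then (if odd i then 3 else 0)
  else if i < 4 * q then (if odd i then 3 else 1)
  else if i < 8 * q then (if odd i then 3 else 2) else 0.
Proof.
rewrite /zq nth_cat size_wpow /= [q * 2]mulnC.
case: ifP => H1; first by rewrite nth_wpow H1.
rewrite nth_cat size_wpow /= [q * 2]mulnC.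
have -> : (i - 2 * q < 2 * q) = (i < 4 * q) by lia.
case: ifP => H2.
  rewrite nth_wpow.
  have -> : (i - 2 * q < 2 * q) = true by lia.
  by rewrite odd_sub2 //; lia.
rewrite nth_wpow.
have -> : (i - 2 * q - 2 * q < 2 * (2 * q)) = (i < 8 * q) by lia.
have -> : i - 2 * q - 2 * q = i - 2 * (2 * q) by lia.
case: ifP => H3 //; rewrite odd_sub2 //; lia.
Qed.

Lemma nz_facts q i : 0 < q -> i < 8 * q ->
  [/\ nth 0 (zq q) i <= 3, nth 0 (zq q) i = 0 -> i < 2 * q,
      nth 0 (zq q) i = 1 -> 2 * q <= i & nth 0 (zq q) i = 2 -> 4 * q <= i].
Proof.
move=> Hq Hi; rewrite nth_z.
case: ifP => H1; first by case: (odd i).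
case: ifP => H2; first by case: (odd i); split=> //; lia.
rewrite ifT //; case: (odd i); split=> //; lia.
Qed.

Lemma part3 : ~ context_free (bdi_lang L14).
Proof.
move=> [G HG].
have [p Hp] := pumping G.
set q := p.+2.
have Hq : q = p.+2 by [].
clearbody q.
have Hz : cfg_lang G (zq q) by apply/HG; apply: K_in_bdi; lia.
have Hsz : size (zq q) = 8 * q by rewrite /zq !size_cat !size_wpow /=; lia.
have [u [v [x [y [z' [Ez [Hvy [Hw Hpump]]]]]]]] := Hp (zq q) Hz ltac:(lia).
have Pm i := memb (proj2 (HG _) (Hpump i)).
have cntP j i : count (pred1 j) (u ++ flatten (nseq i v) ++ x ++ flatten (nseq i y) ++ z') =
   count (pred1 j) u + i * count (pred1 j) v + count (pred1 j) x + i * count (pred1 j) y + count (pred1 j) z'.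
  by rewrite !count_cat !count_flat; lia.
have cntz j : count (pred1 j) (zq q) = count (pred1 j) u + count (pred1 j) v + count (pred1 j) x +
   count (pred1 j) y + count (pred1 j) z' by rewrite Ez !count_cat; lia.
have cz0 : count (pred1 0) (zq q) = q by rewrite /zq !count_cat !count_wpow /=; lia.
have cz2 : count (pred1 2) (zq q) = 2 * q by rewrite /zq !count_cat !count_wpow /=; lia.
have Hsw : size u + size (v ++ x ++ y) <= 8 * q by rewrite -Hsz Ez !size_cat; lia.
have win : forall e, e \in v ++ y -> exists i, i < p /\ size u + i < 8 * q /\ nth 0 (zq q) (size u + i) = e.
  move=> e; rewrite mem_cat => /orP [He|He].
    exists (index e v); have Hi : index e v < size v by rewrite index_mem.
    split; first by move: Hw; rewrite !size_cat; lia.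
    split; first by move: Hsw; rewrite !size_cat; lia.
    rewrite Ez nth_cat ltnNge leq_addr /= addKn nth_cat Hi nth_index //.
  exists (size v + (size x + index e y)); have Hi : index e y < size y by rewrite index_mem.
  split; first by move: Hw; rewrite !size_cat; lia.
  split; first by move: Hsw; rewrite !size_cat; lia.
  rewrite Ez nth_cat ltnNge leq_addr /= addKn nth_cat ltnNge leq_addr /= addKn.
  by rewrite nth_cat ltnNge leq_addr /= addKn nth_cat Hi nth_index.
have z1 : nth 0 (zq q) 1 = 3 by rewrite nth_z ifT //; lia.
have nthP i : 1 < size u -> nth 0 (u ++ flatten (nseq i v) ++ x ++ flatten (nseq i y) ++ z') 1 = 3.
  by move=> Hu; rewrite nth_cat Hu -z1 Ez nth_cat Hu.
have inP j : 0 < count (pred1 j) v + count (pred1 j) y -> j \in v ++ y.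
  by move=> H; rewrite -has_pred1 has_count count_cat.
have [e He] : exists e, e \in v ++ y by case: (v ++ y) Hvy => // a s _; exists a; rewrite inE eqxx.
have [ie [Hie [Hie8 Ee]]] := win e He.
have de : 0 < count (pred1 e) v + count (pred1 e) y by rewrite -count_cat -has_count has_pred1.
have [e3 _ _ _] := nz_facts (ltac:(lia) : 0 < q) Hie8; rewrite Ee in e3.
have Hds : 0 < count (pred1 0) v + count (pred1 0) y \/ 0 < count (pred1 1) v + count (pred1 1) y \/
   0 < count (pred1 2) v + count (pred1 2) y \/ 0 < count (pred1 3) v + count (pred1 3) y.
  move: de e3; case: e {He Ee} => [|[|[|[|e]]]] // => de _; tauto.
have [m0 [n0 [A0 [B0 [C0 [D0 F0]]]]]] := Pm 0.
have [m2 [n2 [A2 [B2 [C2 [D2 F2]]]]]] := Pm 2.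
rewrite cntP in A0; rewrite cntP in B0; rewrite cntP in C0; rewrite cntP in D0.
rewrite cntP in A2; rewrite cntP in B2; rewrite cntP in C2; rewrite cntP in D2.
have Z0 := cntz 0; have Z1 := cntz 1; have Z2 := cntz 2; have Z3 := cntz 3.
have cz1 : count (pred1 1) (zq q) = q by rewrite /zq !count_cat !count_wpow /=; lia.
have cz3 : count (pred1 3) (zq q) = 4 * q by rewrite /zq !count_cat !count_wpow /=; lia.
set c0u := count (pred1 0) u.
set c0v := count (pred1 0) v.
set c0x := count (pred1 0) x.
set c0y := count (pred1 0) y.
set c0zp := count (pred1 0) z'.
set c0z := count (pred1 0) (zq q).
set c1u := count (pred1 1) u.
set c1v := count (pred1 1) v.
set c1x := count (pred1 1) x.
set c1y := count (pred1 1) y.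
set c1zp := count (pred1 1) z'.
set c1z := count (pred1 1) (zq q).
set c2u := count (pred1 2) u.
set c2v := count (pred1 2) v.
set c2x := count (pred1 2) x.
set c2y := count (pred1 2) y.
set c2zp := count (pred1 2) z'.
set c2z := count (pred1 2) (zq q).
set c3u := count (pred1 3) u.
set c3v := count (pred1 3) v.
set c3x := count (pred1 3) x.
set c3y := count (pred1 3) y.
set c3zp := count (pred1 3) z'.
set c3z := count (pred1 3) (zq q).
case: (posnP (count (pred1 2) v + count (pred1 2) y)) => Hd2.
- have Hd1 : 0 < count (pred1 1) v + count (pred1 1) y.
    lia.
  have [i1 [Hi1 [Hi18 E1]]] := win 1 (inP 1 Hd1).
  have [_ _ F _] := nz_facts (ltac:(lia) : 0 < q) Hi18.
  have Hu := F E1.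
  have := F2 ltac:(lia); rewrite nthP //; lia.
- have [i2 [Hi2 [Hi28 E2]]] := win 2 (inP 2 Hd2).
  have [_ _ _ F] := nz_facts (ltac:(lia) : 0 < q) Hi28.
  have Hu := F E2.
  case: (posnP (count (pred1 0) v + count (pred1 0) y)) => Hd0.
    have := F0 ltac:(lia); rewrite nthP //; lia.
  have [i0 [Hi0 [Hi08 E0]]] := win 0 (inP 0 Hd0).
  have [_ F' _ _] := nz_facts (ltac:(lia) : 0 < q) Hi08.
  have := F' E0; lia.
Qed.

Theorem mainTheorem14 :
  context_free L14 /\
  (forall w, (bdi_lang L14 w /\ R14 w) <-> K14 w) /\
  ~ context_free (bdi_lang L14).
Proof. split; [exact: part1 | split; [exact: part2 | exact: part3]]. Qed.
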